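(* Let $\widetilde V$ be a real Hilbert space with inner product $M(\cdot,\cdot)$ and norm $\|\cdot\|_M$. Let $N(\cdot,\cdot)$ be a symmetric positive semi-definite bilinear form on $\widetilde V$ with seminorm $\|\cdot\|_N$, and assume $\|\cdot\|_N$ is compact with respect to $\|\cdot\|_M$ (every $\|\cdot\|_M$-bounded sequence in $\widetilde V$ has a subsequence that is Cauchy in $\|\cdot\|_N$). Let $V$ and $V_h$ be closed linear subspaces of $\widetilde V$, with $V_h$ finite-dimensional. Let $\lambda_1\le\lambda_2\le\cdots$ ($d$ of them, $d\in\mathbb N\cup\{\infty\}$) and $0<\lambda_{h,1}\le\cdots\le\lambda_{h,n}$ be the eigenvalues defined in the context, and let $P_h:\widetilde V\to V_h$ be the $M$-orthogonal projection. Suppose there exists a positive constant $C_h$ such that $$\|u-P_hu\|_N\le C_h\|u-P_hu\|_M\quad\forall u\in V.$$ Then $$\lambda_k\ge\frac{\lambda_{h,k}}{1+C_h^2\lambda_{h,k}},\qquad k=1,2,\ldots,\min(n,d).$$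
   Context: Define $\mathcal K:V\to V$ by $M(\mathcal Kf,v)=N(f,v)$ for all $v\in V$; then $\mathrm{Ker}(\mathcal K)=\{v\in V: N(v,v)=0\}$. Let $\mathrm{Ker}(\mathcal K)^\perp$ be its $M$-orthogonal complement in $V$ and $d=\dim \mathrm{Ker}(\mathcal K)^\perp$ (possibly infinite). The eigenvalues $\lambda_k$ ($k=1,\ldots,d$, increasing, repeated according to multiplicity) are those of the problem: find $(\lambda,u)\in\mathbb R\times \mathrm{Ker}(\mathcal K)^\perp$ with $M(u,v)=\lambda N(u,v)$ for all $v\in\mathrm{Ker}(\mathcal K)^\perp$ (equivalently $\lambda_k=\mu_k^{-1}$ where $\mu_1\ge\mu_2\ge\cdots>0$ are the nonzero eigenvalues of the compact self-adjoint operator $\mathcal K$). Analogously, $\mathrm{Ker}(\mathcal K_h)=\{v_h\in V_h:N(v_h,v_h)=0\}$, $\mathrm{Ker}(\mathcal K_h)^\perp$ is its $M$-orthogonal complement in $V_h$, $n=\dim\mathrm{Ker}(\mathcal K_h)^\perp$, and $0<\lambda_{h,1}\le\cdots\le\lambda_{h,n}$ are the eigenvalues of: find $(\lambda_h,u_h)\in\mathbb R\times\mathrm{Ker}(\mathcal K_h)^\perp$ with $M(u_h,v_h)=\lambda_hN(u_h,v_h)$ for all $v_h\in\mathrm{Ker}(\mathcal K_h)^\perp$. The projection $P_h$ is defined by $M(u-P_hu,v_h)=0$ for all $v_h\in V_h$. *)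

(* Defs.v *)
From HB Require Import structures.
From mathcomp Require Import all_boot all_order all_algebra.
From mathcomp Require Import reals.
Set Implicit Arguments. Unset Strict Implicit. Unset Printing Implicit Defensive.
Import Order.TTheory GRing.Theory Num.Theory.
Local Open Scope ring_scope.

Section Defs.
Variables (R : realType) (T : lmodType R).

Definition sym_bilinear (B : T -> T -> R) : Prop :=
  (forall x y, B x y = B y x) /\
  (forall (a : R) x y z, B (a *: x + y) z = a * B x z + B y z).

Definition bnorm (B : T -> T -> R) (x : T) : R := Num.sqrt (B x x).

Definition inner_product (M : T -> T -> R) : Prop :=
  sym_bilinear M /\ (forall x, x != 0 -> 0 < M x x).

Definition psd_form (N : T -> T -> R) : Prop :=
  sym_bilinear N /\ (forall x, 0 <= N x x).

Definition cauchy_seq (B : T -> T -> R) (u : nat -> T) : Prop :=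
  forall e : R, 0 < e -> exists K : nat, forall m k, (K <= m)%N -> (K <= k)%N ->
    bnorm B (u m - u k) < e.

Definition converges_to (B : T -> T -> R) (u : nat -> T) (x : T) : Prop :=
  forall e : R, 0 < e -> exists K : nat, forall m, (K <= m)%N -> bnorm B (u m - x) < e.

Definition hilbert (M : T -> T -> R) : Prop :=
  inner_product M /\
  (forall u, cauchy_seq M u -> exists x, converges_to M u x).

Definition compact_wrt (N M : T -> T -> R) : Prop :=
  forall u : nat -> T, (exists c : R, forall k, bnorm M (u k) <= c) ->
    exists phi : nat -> nat, (forall k, (phi k < phi k.+1)%N) /\
      cauchy_seq N (fun k => u (phi k)).

Definition subspace (V : T -> Prop) : Prop :=
  V 0 /\ (forall (a : R) x y, V x -> V y -> V (a *: x + y)).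

Definition closed_subspace (M : T -> T -> R) (V : T -> Prop) : Prop :=
  subspace V /\ (forall u x, (forall k, V (u k)) -> converges_to M u x -> V x).

Definition lin_indep (m : nat) (f : 'I_m -> T) : Prop :=
  forall c : 'I_m -> R, \sum_(i < m) c i *: f i = 0 -> forall i, c i = 0.

Definition has_indep (S : T -> Prop) (m : nat) : Prop :=
  exists f : 'I_m -> T, (forall i, S (f i)) /\ lin_indep f.

Definition dim_eq (S : T -> Prop) (m : nat) : Prop :=
  has_indep S m /\ ~ has_indep S m.+1.

Definition finite_dim (S : T -> Prop) : Prop := exists m, dim_eq S m.

(* d : option nat is a dimension in N \cup {oo}; None = infinity *)
Definition dim_ext (S : T -> Prop) (d : option nat) : Prop :=
  match d with Some m => dim_eq S m | None => forall m, has_indep S m end.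

Definition ltd (k : nat) (d : option nat) : Prop :=
  match d with Some m => (k < m)%N | None => True end.

Definition is_K (M N : T -> T -> R) (V : T -> Prop) (K : T -> T) : Prop :=
  (forall f, V f -> V (K f)) /\ (forall f v, V f -> V v -> M (K f) v = N f v).

Definition kerK (V : T -> Prop) (K : T -> T) : T -> Prop :=
  fun v => V v /\ K v = 0.

Definition kerK_perp (M : T -> T -> R) (V : T -> Prop) (K : T -> T) : T -> Prop :=
  fun u => V u /\ forall w, kerK V K w -> M u w = 0.

Definition eigspace (M N : T -> T -> R) (W : T -> Prop) (mu : R) : T -> Prop :=
  fun u => W u /\ forall v, W v -> M u v = mu * N u v.

Definition is_eigval (M N : T -> T -> R) (W : T -> Prop) (mu : R) : Prop :=
  exists u, u != 0 /\ eigspace M N W mu u.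

Definition card_eq (P : nat -> Prop) (m : nat) : Prop :=
  exists s : seq nat, uniq s /\ size s = m /\ forall k, P k <-> k \in s.

(* lam_0 <= lam_1 <= ... (indices k with ltd k d) are the eigenvalues of the
   problem on W, in increasing order, repeated according to multiplicity *)
Definition eig_enum (M N : T -> T -> R) (W : T -> Prop) (lam : nat -> R)
    (d : option nat) : Prop :=
  (forall k, ltd k d -> is_eigval M N W (lam k)) /\
  (forall k l, ltd l d -> (k <= l)%N -> lam k <= lam l) /\
  (forall mu, is_eigval M N W mu ->
     exists m, dim_eq (eigspace M N W mu) m /\
               card_eq (fun k => ltd k d /\ lam k = mu) m).

Definition is_Mproj (M : T -> T -> R) (Vh : T -> Prop) (P : T -> T) : Prop :=
  forall u, Vh (P u) /\ forall v, Vh v -> M (u - P u) v = 0.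

End Defs.

(* Main.v *)
Require Import Defs.
From HB Require Import structures.
From mathcomp Require Import all_boot all_order all_algebra.
From mathcomp Require Import reals.
From mathcomp Require Import ring lra.
From Stdlib Require Classical_Prop.
Import Order.TTheory GRing.Theory Num.Theory.
Local Open Scope ring_scope.
Set Implicit Arguments. Unset Strict Implicit. Unset Printing Implicit Defensive.

Lemma real_cs (R : realType) (a b c : R) :
  0 <= c -> (forall t, 0 <= a - 2 * t * b + t ^+ 2 * c) -> b ^+ 2 <= a * c.
Proof.
move=> c0 H.
have [cz|cp] := eqVneq c 0.
  subst c; rewrite mulr0.
  have [bz|bn] := eqVneq b 0; first by rewrite bz expr0n.
  have := H ((a + 1) / (2 * b)).
  have -> : a - 2 * ((a + 1) / (2 * b)) * b + ((a + 1) / (2 * b)) ^+ 2 * 0 = -1.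
    by field.
  by rewrite ler0N1.
have cpos : 0 < c by rewrite lt0r cp.
have := H (b / c).
have -> : a - 2 * (b / c) * b + (b / c) ^+ 2 * c = (a * c - b ^+ 2) / c by field.
by rewrite pmulr_lge0 ?invr_gt0 // subr_ge0.
Qed.

Section Bil.
Variables (R : realType) (T : lmodType R) (B : T -> T -> R).
Hypothesis HB : sym_bilinear B.

Lemma B0l z : B 0 z = 0.
Proof.
have := HB.2 1 0 0 z; rewrite scale1r addr0 mul1r => h; lra.
Qed.
Lemma BDl x y z : B (x + y) z = B x z + B y z.
Proof. by have := HB.2 1 x y z; rewrite scale1r mul1r. Qed.
Lemma BZl a x z : B (a *: x) z = a * B x z.
Proof. by have := HB.2 a x 0 z; rewrite addr0 B0l addr0. Qed.
Lemma BNl x z : B (- x) z = - B x z.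
Proof. by rewrite -scaleN1r BZl mulN1r. Qed.
Lemma BBl x y z : B (x - y) z = B x z - B y z.
Proof. by rewrite BDl BNl. Qed.
Lemma B0r z : B z 0 = 0. Proof. by rewrite HB.1 B0l. Qed.
Lemma BDr x y z : B z (x + y) = B z x + B z y.
Proof. by rewrite HB.1 BDl !(HB.1 z). Qed.
Lemma BZr a x z : B z (a *: x) = a * B z x.
Proof. by rewrite HB.1 BZl HB.1. Qed.
Lemma BBr x y z : B z (x - y) = B z x - B z y.
Proof. by rewrite HB.1 BBl !(HB.1 z). Qed.

Lemma Bsuml (I : Type) (r : seq I) (P : pred I) (F : I -> T) z :
  B (\sum_(i <- r | P i) F i) z = \sum_(i <- r | P i) B (F i) z.
Proof.
apply: (big_rec2 (fun y1 y2 => B y1 z = y2)); first exact: B0l.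
by move=> i y1 y2 _ <-; rewrite BDl.
Qed.
Lemma Bsumr (I : Type) (r : seq I) (P : pred I) (F : I -> T) z :
  B z (\sum_(i <- r | P i) F i) = \sum_(i <- r | P i) B z (F i).
Proof. by rewrite HB.1 Bsuml; apply: eq_bigr => i _; rewrite HB.1. Qed.

Lemma Bexp p (a b : 'I_p -> R) (e f : 'I_p -> T) :
  B (\sum_i a i *: e i) (\sum_j b j *: f j) =
  \sum_i \sum_j a i * b j * B (e i) (f j).
Proof.
rewrite Bsuml; apply: eq_bigr => i _; rewrite BZl Bsumr big_distrr.
by apply: eq_bigr => j _; rewrite BZr /= mulrA.
Qed.

Lemma B_expand x y t : B (x - t *: y) (x - t *: y) =
  B x x - 2 * t * B x y + t ^+ 2 * B y y.
Proof.
rewrite BBl !BBr !BZl !BZr (HB.1 y x); ring.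
Qed.

Lemma BDD x y : B (x + y) (x + y) = B x x + 2 * B x y + B y y.
Proof. rewrite BDl !BDr (HB.1 y x); ring. Qed.

Lemma B_cs : (forall x, 0 <= B x x) -> forall x y, B x y ^+ 2 <= B x x * B y y.
Proof.
move=> psd x y; apply: real_cs => // t; rewrite -B_expand; exact: psd.
Qed.

End Bil.

Section Sub.
Variables (R : realType) (T : lmodType R) (V : T -> Prop).
Hypothesis HV : subspace V.
Lemma subD x y : V x -> V y -> V (x + y).
Proof. by move=> hx hy; have := HV.2 1 x y hx hy; rewrite scale1r. Qed.
Lemma subZ a x : V x -> V (a *: x).
Proof. by move=> hx; have := HV.2 a x 0 hx HV.1; rewrite addr0. Qed.
Lemma subB x y : V x -> V y -> V (x - y).
Proof. by move=> hx hy; rewrite -scaleN1r; apply: subD => //; apply: subZ. Qed.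
Lemma subsum (I : Type) (r : seq I) (P : pred I) (F : I -> T) :
  (forall i, P i -> V (F i)) -> V (\sum_(i <- r | P i) F i).
Proof.
move=> H; apply: (big_rec (fun y => V y)); first exact: HV.1.
by move=> i y Pi Vy; apply: subD => //; apply: H.
Qed.
End Sub.

Section Eig.
Variables (R : realType) (T : lmodType R) (M N : T -> T -> R).
Hypotheses (HM : inner_product M) (HN : psd_form N).
Variable W : T -> Prop.
Hypothesis HW : subspace W.

Lemma M0 x : M x x = 0 -> x = 0.
Proof.
move=> h; apply/eqP; apply: contraT => /HM.2; by rewrite h ltxx.
Qed.

Lemma eig_rel mu x y : eigspace M N W mu x -> W y -> M x y = mu * N x y.
Proof. by case=> _ H /H. Qed.

Lemma eig_N0 mu nu x y : eigspace M N W mu x -> eigspace M N W nu y ->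
  mu != nu -> N x y = 0.
Proof.
move=> hx hy mn.
have h1 := eig_rel hx hy.1; have h2 := eig_rel hy hx.1.
rewrite HM.1.1 HN.1.1 h1 in h2.
have : (mu - nu) * N x y = 0 by rewrite mulrBl h2 subrr.
by move/eqP; rewrite mulf_eq0 subr_eq0 (negbTE mn) => /eqP.
Qed.

Lemma eig_M0 mu nu x y : eigspace M N W mu x -> eigspace M N W nu y ->
  mu != nu -> M x y = 0.
Proof.
move=> hx hy mn; rewrite (eig_rel hx hy.1) (eig_N0 hx hy mn); exact: mulr0.
Qed.

Lemma eig_sub mu : subspace (eigspace M N W mu).
Proof.
split.
  split; first exact: HW.1.
  by move=> v _; rewrite (B0l HM.1) (B0l HN.1) mulr0.
move=> a x y [hx Hx] [hy Hy]; split; first exact: HW.2.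
move=> v hv; rewrite HM.1.2 HN.1.2 Hx // Hy //; ring.
Qed.

Lemma eigval_pos mu : is_eigval M N W mu -> 0 < mu.
Proof.
case=> u [un [hu Hu]].
have h := Hu u hu; have mp := HM.2 u un; have np := HN.2 u.
rewrite h in mp.
case: (lerP mu 0) => // m0.
have : mu * N u u <= 0 by rewrite mulr_le0_ge0.
by rewrite leNgt mp.
Qed.

Lemma quad p (e : 'I_p -> T) (mu c : 'I_p -> R) (alpha beta : R) :
  (forall i, eigspace M N W (mu i) (e i)) ->
  (forall i, 0 <= alpha * mu i + beta) ->
  0 <= alpha * M (\sum_i c i *: e i) (\sum_i c i *: e i)
       + beta * N (\sum_i c i *: e i) (\sum_i c i *: e i).
Proof.
move=> He Hpos.
pose s i := Num.sqrt (alpha * mu i + beta).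
suff -> : alpha * M (\sum_i c i *: e i) (\sum_i c i *: e i)
       + beta * N (\sum_i c i *: e i) (\sum_i c i *: e i) =
       N (\sum_i (s i * c i) *: e i) (\sum_i (s i * c i) *: e i) by exact: HN.2.
rewrite !(Bexp HM.1) !(Bexp HN.1) !big_distrr -big_split /=.
apply: eq_bigr => i _; rewrite !big_distrr -big_split /=.
apply: eq_bigr => j _.
rewrite (eig_rel (He i) (He j).1).
have [mij|mij] := eqVneq (mu i) (mu j).
  have sij : s j = s i by rewrite /s mij.
  rewrite sij.
  have : s i ^+ 2 = alpha * mu i + beta by rewrite sqr_sqrtr.
  move=> hs; rewrite -[_ * (s i * c j) * _]/(_) ; set n := N _ _.
  transitivity (c i * c j * n * (alpha * mu i + beta)); first by ring.
  rewrite -hs; ring.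
by rewrite (eig_N0 (He i) (He j) mij); ring.
Qed.

End Eig.

Lemma ltd_le k j d : ltd j d -> (k <= j)%N -> ltd k d.
Proof. by case: d => //= m hj hk; apply: leq_ltn_trans hk hj. Qed.

Section Fam.
Variables (R : realType) (T : lmodType R) (M N : T -> T -> R).
Hypotheses (HM : inner_product M) (HN : psd_form N).
Variable W : T -> Prop.
Hypothesis HW : subspace W.

Definition rk (lam : nat -> R) j := count (fun i => lam i == lam j) (iota 0 j).

Lemma rk_lt (lam : nat -> R) j1 j2 : (j1 < j2)%N -> lam j1 = lam j2 ->
  (rk lam j1 < rk lam j2)%N.
Proof.
move=> lt12 e12; rewrite /rk.
have [k hk] : exists k, j2 = (j1 + k.+1)%N.
  by exists (j2 - j1.+1)%N; rewrite addnS -addSn subnKC.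
subst j2; rewrite iotaD count_cat add0n /= -e12 eqxx.
by rewrite add1n addnS ltnS leq_addr.
Qed.

Lemma eig_family (lam : nat -> R) (d : option nat) :
  eig_enum M N W lam d ->
  forall a p, (forall j, (j < p)%N -> ltd (a + j) d) ->
  exists f : 'I_p -> T,
    (forall j : 'I_p, eigspace M N W (lam (a + j)) (f j)) /\ lin_indep f.
Proof.
case=> Hev [_ Hmult] a p Hd.
have : forall mu : R, exists y : nat * (nat -> T), is_eigval M N W mu ->
   [/\ card_eq (fun k => ltd k d /\ lam k = mu) y.1,
       (forall i, (i < y.1)%N -> eigspace M N W mu (y.2 i)) &
       lin_indep (fun i : 'I_y.1 => y.2 i)].
  move=> mu; case: (boolp.pselect (is_eigval M N W mu)); last first.
    by move=> hn; exists (0%N, fun _ => 0) => /hn.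
  move=> /Hmult [m [[[g [Hg Hind]] _] Hc]].
  exists (m, fun i => if insub i is Some o then g o else 0) => _ /=.
  split => //.
    by move=> i him; rewrite insubT.
  move=> c; rewrite (eq_bigr (fun i => c i *: g i)); first exact: Hind.
  by move=> i _; rewrite valK.
case/boolp.choice => G HG.
have Hrk : forall j, ltd j d -> (rk lam j < (G (lam j)).1)%N.
  move=> j hj; have [[s [us [ss Hs]]] _ _] := HG _ (Hev j hj).
  rewrite -ss.
  have -> : rk lam j = (count (fun i => lam i == lam j) (iota 0 j.+1)).-1.
    by rewrite -addn1 iotaD count_cat /= eqxx addn1.
  rewrite -size_filter.
  set s1 := filter _ _.
  have : (size s1 <= size s)%N.
    apply: uniq_leq_size; first by rewrite filter_uniq // iota_uniq.
    move=> i; rewrite mem_filter mem_iota add0n => /andP [/eqP hl hi].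
    apply/Hs; split => //; apply: ltd_le hj _; by rewrite -ltnS.
  have : (0 < size s1)%N.
    rewrite size_filter -has_count; apply/hasP; exists j => //.
    by rewrite mem_iota add0n ltnSn.
  by case: (size s1) => //= n _ h.
pose f (j : 'I_p) := (G (lam (a + j))).2 (rk lam (a + j)).
exists f; split.
  move=> j; have hj := Hd _ (ltn_ord j).
  have [_ Hg _] := HG _ (Hev _ hj); apply: Hg; exact: Hrk.
move=> c Hsum j0.
have hj0 := Hd _ (ltn_ord j0).
set mu := lam (a + j0).
have [_ Hg Hind] := HG _ (Hev _ hj0).
have Hfe : forall j : 'I_p, eigspace M N W (lam (a + j)) (f j).
  move=> j; have hj := Hd _ (ltn_ord j).
  have [_ Hg' _] := HG _ (Hev _ hj); apply: Hg'; exact: Hrk.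
pose Pj (j : 'I_p) := lam (a + j) == mu.
pose w := \sum_(j | Pj j) c j *: f j.
have Hw : eigspace M N W mu w.
  apply: (subsum (eig_sub HM HN HW mu)) => j /eqP Pj'.
  apply: (subZ (eig_sub HM HN HW mu)); rewrite -Pj'; exact: Hfe.
have w0 : w = 0.
  apply: (M0 HM).
  have H0 : M w (\sum_j c j *: f j) = 0 by rewrite Hsum (B0r HM.1).
  have Hz : M w (\sum_(i | ~~ Pj i) c i *: f i) = 0.
    rewrite (Bsumr HM.1) big1 // => j hj.
    by rewrite (BZr HM.1) (eig_M0 HM HN Hw (Hfe j)) ?mulr0 // eq_sym.
  by rewrite (bigID Pj) /= (BDr HM.1) -/w Hz addr0 in H0.
set m := (G mu).1 in Hg Hind.
set g := (G mu).2 in Hg Hind.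
have o0lt : (rk lam (a + j0) < m)%N by exact: Hrk.
pose o0 : 'I_m := Ordinal o0lt.
pose pj (j : 'I_p) : 'I_m := insubd o0 (rk lam (a + j)).
have pjv : forall j, Pj j -> val (pj j) = rk lam (a + j).
  move=> j /eqP hj; rewrite val_insubd.
  have := Hrk _ (Hd _ (ltn_ord j)); rewrite hj -/m => ->; done.
pose b (o : 'I_m) := \sum_(j | Pj j && (pj j == o)) c j.
have Hb : \sum_o b o *: g o = w.
  rewrite /w (partition_big pj predT) //=.
  apply: eq_bigr => o _; rewrite scaler_suml; apply: eq_bigr => j hj.
  have hP : Pj j by case/andP: hj.
  have ho : pj j = o by case/andP: hj => _ /eqP.
  rewrite /f; move/eqP: (hP) => ->; rewrite -/g -(pjv _ hP) ho //.
have b0 := Hind b; rewrite Hb w0 in b0.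
have := b0 erefl (pj j0).
rewrite /b (big_pred1 j0) //.
move=> j /=; apply/andP/eqP; last by move=> ->; rewrite /Pj !eqxx.
case=> hP /eqP hpj.
have hr : rk lam (a + j) = rk lam (a + j0).
  by rewrite -(pjv _ hP) hpj pjv // /Pj.
move/eqP: hP => hl.
apply: val_inj; apply/eqP; rewrite -(eqn_add2l a); apply/eqP.
case: (ltngtP (a + j) (a + j0)) => // h.
  by have := rk_lt h hl; rewrite hr ltnn.
by have := rk_lt h (esym hl); rewrite hr ltnn.
Qed.

End Fam.

Lemma split_l m n (i : 'I_m) : split (lshift n i) = inl i.
Proof. exact: (unsplitK (inl i)). Qed.
Lemma split_r m n (i : 'I_n) : split (rshift m i) = inr i.
Proof. exact: (unsplitK (inr i)). Qed.

Lemma perp_sub (R : realType) (T : lmodType R) (M : T -> T -> R) V K :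
  sym_bilinear M -> subspace V -> subspace (kerK_perp M V K).
Proof.
move=> HM HV; split.
  by split; [exact: HV.1 | move=> w _; rewrite (B0l HM)].
move=> a x y [hx Hx] [hy Hy]; split; first exact: HV.2.
by move=> w hw; rewrite HM.2 Hx // Hy // mulr0 addr0.
Qed.

Lemma real_step (R : realType) (Lh A G Ng X : R) : 0 < Lh -> 0 <= A -> 0 <= G ->
  0 <= X -> G ^+ 2 <= A * Ng -> Ng * Lh <= G -> A ^+ 2 <= G * X -> A * Lh <= X.
Proof.
move=> Lp A0 G0 X0 h1 h2 h3.
have h4 : G * Lh <= A.
  have : G ^+ 2 * Lh <= A * G.
    apply: le_trans (_ : A * Ng * Lh <= _); first by rewrite ler_pM2r.
    nra.
  move=> h; have [->|Gp] := eqVneq G 0; first by rewrite mul0r.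
  have Gpos : 0 < G by rewrite lt0r Gp.
  by rewrite -(ler_pM2l Gpos); nra.
have [->|Ap] := eqVneq A 0; first by rewrite mul0r.
have Apos : 0 < A by rewrite lt0r Ap.
rewrite -(ler_pM2l Apos); nra.
Qed.

Lemma real_final (R : realType) (L Lh Ch X Y A Bw C : R) :
  0 < L -> 0 < Lh -> 0 < Ch -> 0 <= A -> 0 <= Bw -> 0 < X + Y ->
  X + Y <= L * (A + 2 * C + Bw) ->
  0 <= (Ch ^+ 2 * Lh) ^+ 2 * A - 2 * (Ch ^+ 2 * Lh) * C + Bw ->
  A * Lh <= X -> Bw <= Ch ^+ 2 * Y ->
  Lh / (1 + Ch ^+ 2 * Lh) <= L.
Proof.
move=> Lp Lhp Chp A0 B0 XY h1 h2 h3 h4.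
set t := Ch ^+ 2 * Lh in h2 *.
have tp : 0 < t by rewrite /t mulr_gt0 // exprn_gt0.
set S := A + 2 * C + Bw in h1.
have e1 : t * S <= t * (1 + t) * A + (1 + t) * Bw by rewrite /S; nra.
have e2 : Lh * (t * S) <= t * (1 + t) * (X + Y).
  have e3 : Lh * Bw <= t * Y by rewrite /t; nra.
  have e4 : Lh * (t * S) <= Lh * (t * (1 + t) * A + (1 + t) * Bw) by nra.
  nra.
have e5 : Lh * (X + Y) <= L * (1 + t) * (X + Y).
  have : t * (Lh * (X + Y)) <= t * (L * (1 + t) * (X + Y)).
    have : Lh * (X + Y) <= Lh * (L * S) by nra.
    nra.
  by rewrite ler_pM2l.
have e6 : Lh <= L * (1 + t).
  by move: e5; rewrite ler_pM2r.
have hp : 0 < 1 + t by rewrite addr_gt0.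
by rewrite ler_pdivrMr // mulrC.
Qed.

Theorem theorem2p4 (R : realType) (T : lmodType R) (M N : T -> T -> R)
  (V Vh : T -> Prop) (K Kh : T -> T) (P : T -> T)
  (d : option nat) (n : nat) (lam lamh : nat -> R) (Ch : R) :
  hilbert M -> psd_form N -> compact_wrt N M ->
  closed_subspace M V -> closed_subspace M Vh -> finite_dim Vh ->
  is_K M N V K -> is_K M N Vh Kh ->
  dim_ext (kerK_perp M V K) d -> eig_enum M N (kerK_perp M V K) lam d ->
  dim_eq (kerK_perp M Vh Kh) n -> eig_enum M N (kerK_perp M Vh Kh) lamh (Some n) ->
  is_Mproj M Vh P ->
  0 < Ch ->
  (forall u, V u -> bnorm N (u - P u) <= Ch * bnorm M (u - P u)) ->
  forall k : nat, (k < n)%N -> ltd k d ->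
    lamh k / (1 + Ch ^+ 2 * lamh k) <= lam k.
Proof.
move=> HH HN _ HV HVh _ HK HKh _ Heig Hdimh Heigh HP Chp HCh k kn kd.
have HM := HH.1.
have HB := HM.1.
set W := kerK_perp M V K in Heig.
set Wh := kerK_perp M Vh Kh in Hdimh Heigh.
have HW : subspace W := perp_sub K HB HV.1.
have HWh : subspace Wh := perp_sub Kh HB HVh.1.
have [u [Hu Hui]] := @eig_family _ _ _ _ HM HN _ HW _ _ Heig 0 k.+1
  (fun j hj => ltd_le kd hj).
have Hd2 : forall j, (j < n - k)%N -> ltd (k + j) (Some n).
  by move=> j hj /=; rewrite -ltn_subRL.
have [e [He Hei]] := @eig_family _ _ _ _ HM HN _ HWh _ _ Heigh k (n - k) Hd2.
pose s (i : 'I_k.+1) := Kh (P (u i)).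
have Hs : forall i, Wh (s i).
  move=> i; have hv : Vh (P (u i)) := (HP (u i)).1.
  split; first exact: HKh.1 _ hv.
  move=> w [hw kw]; rewrite /s HKh.2 // HN.1.1 -HKh.2 // kw (B0l HB) //.
pose F (i : 'I_(k.+1 + (n - k))) :=
  match split i with inl x => s x | inr y => e y end.
have HF : forall i, Wh (F i).
  by move=> i; rewrite /F; case: split => x; [exact: Hs | exact: (He x).1].
have nF : ~ lin_indep F.
  move=> hF; apply: Hdimh.2.
  have -> : n.+1 = (k.+1 + (n - k))%N by rewrite addSn subnKC // ltnW.
  by exists F.
have [c [Hc [i1 ci1]]] : exists c : 'I_(k.+1 + (n - k)) -> R,
    \sum_i c i *: F i = 0 /\ exists i, c i <> 0.
  apply: Classical_Prop.NNPP => hn; apply: nF => c hc i.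
  apply: Classical_Prop.NNPP => ci; apply: hn; exists c; split => //; by exists i.
pose a i := c (lshift (n - k) i).
pose b j := c (rshift k.+1 j).
have Hc' : \sum_i a i *: s i + \sum_j b j *: e j = 0.
  rewrite big_split_ord /= in Hc; rewrite -[RHS]Hc.
  congr (_ + _); apply: eq_bigr => i _.
    by rewrite /F split_l.
  by rewrite /F split_r.
have [i0 ai0] : exists i, a i <> 0.
  apply: Classical_Prop.NNPP => hn.
  have a0 : forall i, a i = 0.
    by move=> i; apply: Classical_Prop.NNPP => h; apply: hn; exists i.
  have : \sum_j b j *: e j = 0.
    have h0 : \sum_i a i *: s i = 0 by rewrite big1 // => i _; rewrite a0 scale0r.
    by rewrite h0 add0r in Hc'.
  move/Hei => b0; apply: ci1; rewrite -(splitK i1).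
  by case: (split i1) => x /=; [exact: a0 | exact: b0].
pose uu := \sum_i a i *: u i.
have uun : uu != 0.
  by apply/eqP => h; apply: ai0; exact: Hui a h i0.
have Vuu : V uu.
  by apply: (subsum HV.1) => i _; apply: (subZ HV.1); exact: (Hu i).1.1.
have Vhv : Vh (P uu) := (HP uu).1.
have Pv : P uu = \sum_i a i *: P (u i).
  set v' := \sum_i a i *: P (u i).
  have Vhv' : Vh v'.
    by apply: (subsum HVh.1) => i _; apply: (subZ HVh.1); exact: (HP _).1.
  have hz : Vh (P uu - v') by apply: (subB HVh.1).
  apply/eqP; rewrite -subr_eq0; apply/eqP; apply: (M0 HM).
  have hd : P uu - v' = (uu - v') - (uu - P uu).
    by rewrite opprB [RHS]addrC [RHS]addrA subrK.
  rewrite {1}hd (BBl HB) (HP uu).2 // subr0.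
  have -> : uu - v' = \sum_i a i *: (u i - P (u i)).
    by rewrite /uu /v' -sumrB; apply: eq_bigr => i _; rewrite scalerBr.
  rewrite (Bsuml HB) big1 // => i _; rewrite (BZl HB) (HP _).2 ?mulr0 //.
pose g := \sum_i a i *: s i.
have Hg : g = \sum_j (- b j) *: e j.
  have -> : g = - \sum_j b j *: e j.
    by apply/eqP; rewrite -addr_eq0; apply/eqP; exact: Hc'.
  by rewrite -sumrN; apply: eq_bigr => j _; rewrite scaleNr.
have Vhg : Vh g.
  by apply: (subsum HVh.1) => i _; apply: (subZ HVh.1); exact: (Hs i).1.
have Mg : forall x, Vh x -> M g x = N (P uu) x.
  move=> x hx; rewrite Pv (Bsuml HB) (Bsuml HN.1); apply: eq_bigr => i _.
  rewrite (BZl HB) (BZl HN.1) HKh.2 //; exact: (HP _).1.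
have Lhp : 0 < lamh k := eigval_pos HM HN (Heigh.1 k kn).
have Lp : 0 < lam k := eigval_pos HM HN (Heig.1 k kd).
have Mpsd : forall x, 0 <= M x x.
  move=> x; have [->|xn] := eqVneq x 0; first by rewrite (B0l HB).
  exact: ltW (HM.2 x xn).
have Ngg : N g g * lamh k <= M g g.
  have Hpos : forall i : 'I_(n - k), 0 <= 1 / lamh k * lamh (k + i) + -1.
    move=> i; have h := Heigh.2.1 k (k + i) (Hd2 i (ltn_ord i)) (leq_addr _ _).
    have : 1 <= lamh (k + i) / lamh k by rewrite ler_pdivlMr // mul1r.
    rewrite mul1r mulrC; lra.
  have := @quad _ _ _ _ HM HN _ _ e (fun i => lamh (k + i)) (fun j => - b j)
    (1 / lamh k) (-1) He Hpos.
  rewrite -Hg => h.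
  have : N g g <= M g g / lamh k by rewrite mulrC; lra.
  by rewrite ler_pdivlMr.
have hA : N (P uu) (P uu) * lamh k <= M (P uu) (P uu).
  apply: (@real_step _ _ _ (M g g) (N g g)) => //.
  - exact: HN.2.
  - rewrite (Mg g Vhg); exact: (B_cs HN.1 HN.2).
  - rewrite -(Mg _ Vhv); exact: (B_cs HB Mpsd).
set w := uu - P uu.
have hw : N w w <= Ch ^+ 2 * M w w.
  have := HCh uu Vuu; rewrite /bnorm -/w.
  have s1 := sqr_sqrtr (HN.2 w); have s2 := sqr_sqrtr (Mpsd w).
  have p1 := sqrtr_ge0 (N w w); have p2 := sqrtr_ge0 (M w w).
  move: s1 s2 p1 p2; set x1 := Num.sqrt _; set x2 := Num.sqrt _.
  move=> s1 s2 p1 p2 h; rewrite -s1 -s2; nra.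
have euu : uu = P uu + w by rewrite /w addrC subrK.
have Mw0 : M w (P uu) = 0 := (HP uu).2 _ Vhv.
have hMs : M uu uu = M (P uu) (P uu) + M w w.
  have -> : M uu uu = M (P uu + w) (P uu + w) by rewrite -euu.
  rewrite (BDD HB) HB.1 Mw0; lra.
have hNs : N uu uu = N (P uu) (P uu) + 2 * N (P uu) w + N w w.
  have -> : N uu uu = N (P uu + w) (P uu + w) by rewrite -euu.
  by rewrite (BDD HN.1).
have hq : 0 <= (Ch ^+ 2 * lamh k) ^+ 2 * N (P uu) (P uu)
              - 2 * (Ch ^+ 2 * lamh k) * N (P uu) w + N w w.
  have := HN.2 (w - (Ch ^+ 2 * lamh k) *: P uu).
  rewrite (B_expand HN.1) (HN.1.1 w (P uu)); lra.
have hRay : 0 <= -1 * M uu uu + lam k * N uu uu.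
  have Hpos : forall i : 'I_k.+1, 0 <= -1 * lam (0 + i)%N + lam k.
    move=> i; have := Heig.2.1 i k kd; rewrite -ltnS ltn_ord => h.
    by have := h isT; rewrite add0n; lra.
  exact: (@quad _ _ _ _ HM HN _ _ u (fun i => lam (0 + i)%N) a (-1) (lam k) Hu Hpos).
have XY : 0 < M uu uu := HM.2 uu uun.
apply: (@real_final _ _ _ _ (M (P uu) (P uu)) (M w w) (N (P uu) (P uu)) (N w w) (N (P uu) w)) => //.
- exact: HN.2.
- exact: HN.2.
- by rewrite -hMs.
- by rewrite -hMs -hNs; lra.
Qed.
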